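(* Let $m\le n$, $1\le k\le m$, and let $X = X^*$ be a Hermitian operator on $\mathcal{H}_n\otimes\mathcal{H}_m$. Using the notation $\lambda_i^+$, $X^-$, $P_X^-$, $P_X^0$ defined in the context: 1. If $\|P_X^-\|_{S(k)} = 1$, then $X$ is not $k$-block positive. 2. Suppose $\|P_X^0 + P_X^-\|_{S(k)} < 1$ and \[ \lambda_i^+ \ge \frac{\|X^-\|_{S(k)}}{1 - \|P_X^0+P_X^-\|_{S(k)}} \quad \text{for all } i. \] Then $X$ is $k$-block positive. 3. Suppose $\|P_X^-\|_{S(k)} < 1$, all negative eigenvalues of $X$ are equal, $X$ is nonsingular, and \[ \lambda_i^+ < \frac{\|X^-\|_{S(k)}}{1-\|P_X^-\|_{S(k)}} \quad \text{for all } i. \] Then $X$ is not $k$-block positive.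
   Context: $\mathcal{H}_d=\mathbb{C}^d$ and $m\le n$. $SR$ denotes Schmidt rank, i.e. the number of nonzero singular values of the coefficient matrix of a vector in $\mathcal{H}_n\otimes\mathcal{H}_m$. $\|Y\|_{S(k)} := \sup\{|\langle w|Y|v\rangle| : |v\rangle,|w\rangle \text{ unit}, SR(|v\rangle),SR(|w\rangle)\le k\}$. A Hermitian $Y$ is $k$-block positive if $\langle v|Y|v\rangle\ge 0$ for all $|v\rangle$ with $SR(|v\rangle)\le k$. Equivalently, the map associated to $Y$ via the Choi–Jamiołkowski isomorphism is $k$-positive. For Hermitian $X$, fix an orthonormal eigenbasis: - the positive eigenvalues are $\lambda_i^+$ with eigenvectors $|v_i^+\rangle$; - the negative eigenvalues are $\lambda_i^-$ with eigenvectors $|v_i^-\rangle$; - the eigenvectors for eigenvalue $0$ are $|v_i^0\rangle$. Then $X^- := \sum_i \lambda_i^-|v_i^-\rangle\langle v_i^-|$, $P_X^- := \sum_i |v_i^-\rangle\langle v_i^-|$ is the projection onto the negative part, and $P_X^0 := \sum_i|v_i^0\rangle\langle v_i^0|$ is the projection onto the null space. *)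

(* Defs.v *)
From mathcomp Require Import all_boot all_order all_algebra.
From mathcomp Require Import complex.
From mathcomp Require Import boolp classical_sets reals.
Set Implicit Arguments. Unset Strict Implicit. Unset Printing Implicit Defensive.
Import Order.TTheory GRing.Theory Num.Theory.
Local Open Scope ring_scope.
Local Open Scope sesquilinear_scope.

Section Defs.
Variable R : realType.
Local Notation C := R[i].

(* A vector of H_n (x) H_m is represented by its coefficient matrix
   v : 'M[C]_(n,m), i.e. |v> = sum_{i,j} v i j |i>|j>.  Its column vector
   in C^(n*m) is [vec v]. *)
Definition vec n m (v : 'M[C]_(n, m)) : 'cV[C]_(n * m) := (mxvec v)^T.

Definition unit_vec n m (v : 'M[C]_(n, m)) : Prop :=
  \sum_(i < n) \sum_(j < m) `|v i j| ^+ 2 = 1.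

(* Schmidt rank = number of nonzero singular values of the coefficient
   matrix = rank of the coefficient matrix *)
Definition SR n m (v : 'M[C]_(n, m)) : nat := \rank v.

Definition braket n m (w : 'M[C]_(n, m)) (Y : 'M[C]_(n * m))
  (v : 'M[C]_(n, m)) : C := (((vec w) ^t* *m Y *m vec v) 0 0).

Definition normS n m (k : nat) (Y : 'M[C]_(n * m)) : R :=
  sup [set r : R | exists v w : 'M[C]_(n, m),
        [/\ unit_vec v, unit_vec w, (SR v <= k)%N, (SR w <= k)%N &
            r = Normc.normc (braket w Y v)]].

Definition hermmx N (Y : 'M[C]_N) : Prop := Y ^t* = Y.

Definition kblockpos n m (k : nat) (Y : 'M[C]_(n * m)) : Prop :=
  hermmx Y /\ forall v : 'M[C]_(n, m), (SR v <= k)%N -> 0 <= braket v Y v.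

(* Given an orthonormal eigenbasis (columns of the unitary U) and real
   eigenvalues d, the operator U diag(f) U^* *)
Definition specmx N (U : 'M[C]_N) (f : 'I_N -> C) : 'M[C]_N :=
  U *m diag_mx (\row_i f i) *m U ^t*.

Definition Xneg N (U : 'M[C]_N) (d : 'I_N -> R) : 'M[C]_N :=
  specmx U (fun i => if d i < 0 then (d i)%:C%C else 0).
Definition Pneg N (U : 'M[C]_N) (d : 'I_N -> R) : 'M[C]_N :=
  specmx U (fun i => if d i < 0 then 1 else 0).
Definition Pzero N (U : 'M[C]_N) (d : 'I_N -> R) : 'M[C]_N :=
  specmx U (fun i => if d i == 0 then 1 else 0).

End Defs.
Arguments normS {R} n m k Y.
Arguments kblockpos {R} n m k Y.

(* Main.v *)
Require Import Defs.
From mathcomp Require Import all_boot all_order all_algebra.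
From mathcomp Require Import complex.
From mathcomp Require Import boolp classical_sets reals.
From mathcomp Require Import ring lra.
Import Order.TTheory GRing.Theory Num.Theory.
Local Open Scope ring_scope.
Local Open Scope sesquilinear_scope.
Set Implicit Arguments. Unset Strict Implicit. Unset Printing Implicit Defensive.

Section Ar.
Variable R : realFieldType.
Implicit Types x mu L t S p a b c Lb Q qs ns s B P eps dl : R.
Lemma ar1 x mu L t : x <= - mu -> 0 <= t -> x * t <= L * t - (L + mu) * (1 * t).
Proof. move=> h1 h2; nra. Qed.
Lemma ar2 x L mu t : x <= L -> 0 <= t -> x * t <= L * t - (L + mu) * (0 * t).
Proof. move=> h1 h2; nra. Qed.
Lemma ar3 S L mu p : 0 <= S -> S <= L * 1 - (L + mu) * p -> (L + mu) * p <= L.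
Proof. move=> h1 h2; lra. Qed.
Lemma ar4 L mu a b : (L + mu) * a <= L -> (L + mu) * b <= L -> (a + b) / 2 * (L + mu) <= L.
Proof. move=> h1 h2; nra. Qed.
Lemma ar5 L mu : 1 * (L + mu) <= L -> 0 < mu -> False.
Proof. move=> h1 h2; lra. Qed.
Lemma ar6 Lb x t : Lb * t - Lb * (1 * t) + x * t <= x * t.
Proof. lra. Qed.
Lemma ar7 Lb x t : Lb <= x -> 0 <= t -> Lb * t - Lb * (0 * t) + 0 * t <= x * t.
Proof. move=> h1 h2; nra. Qed.
Lemma ar8 Lb t : Lb * t - Lb * (1 * t) + 0 * t <= 0 * t.
Proof. lra. Qed.
Lemma ar9 Lb Q qs ns s S : Lb * 1 - Lb * qs + ns <= S -> qs <= Q -> - ns <= s ->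
  Lb * (1 - Q) = s -> 0 <= Lb -> 0 <= S.
Proof. move=> h1 h2 h3 h4 h5; nra. Qed.
Lemma ar10 x P s : x * (1 - P) < s -> s <= 0 -> 0 < x -> 0 < 1 - P -> False.
Proof. move=> h1 h2 h3 h4; nra. Qed.
Lemma ar12 a b c : c < (a + b) / 2 -> a <= b -> c < b.
Proof. move=> h1 h2; lra. Qed.
Lemma ar12' a b c : c < (a + b) / 2 -> b < a -> c < a.
Proof. move=> h1 h2; lra. Qed.
Lemma ar13 mu B t : 0 <= t -> - mu * t <= B * t - (B + mu) * (1 * t).
Proof. move=> h; nra. Qed.
Lemma ar14 B mu p Pm eps S : 0 <= S -> S <= B * 1 - (B + mu) * p ->
  eps * (B + mu) = mu * Pm - B * (1 - Pm) -> 0 < (B + mu) * (p - (Pm - eps)) -> False.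
Proof. move=> h1 h2 h3 h4; nra. Qed.
End Ar.

Section Aux.
Variable R : realType.
Local Notation C := R[i].

Lemma normcE' (z : C) : `|z| = (Normc.normc z)%:C%C.
Proof. by []. Qed.

Lemma ctr_mul p q r (A : 'M[C]_(p,q)) (B : 'M[C]_(q,r)) : (A *m B)^t* = B^t* *m A^t*.
Proof. by rewrite trmx_mul map_mxM. Qed.

Lemma diag_form N (a b : 'cV[C]_N) (f : 'I_N -> C) :
  (a^t* *m diag_mx (\row_i f i) *m b) 0 0 = \sum_i (a i 0)^* * f i * b i 0.
Proof.
rewrite mul_mx_diag !mxE; apply: eq_bigr => i _; by rewrite !mxE.
Qed.

Definition coef n m (U : 'M[C]_(n * m)) (v : 'M[C]_(n,m)) : 'cV[C]_(n * m) := U ^t* *m vec v.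

Lemma braket_spec n m (U : 'M[C]_(n * m)) f w v :
  braket w (specmx U f) v = \sum_i (coef U w i 0)^* * f i * coef U v i 0.
Proof.
rewrite /braket /specmx /coef -diag_form ctr_mul trmxCK !mulmxA //.
Qed.


Definition Sp n m (U : 'M[C]_(n * m)) (g : 'I_(n * m) -> R) := specmx U (fun i => (g i)%:C%C).
Definition nrm2 N (b : 'cV[C]_N) i := Normc.normc (b i 0) ^+ 2.
Definition tot n m (v : 'M[C]_(n, m)) := \sum_i \sum_j Normc.normc (v i j) ^+ 2.

Lemma conj_mul (z : C) : z^* * z = ((Normc.normc z)^+2)%:C%C.
Proof. by rewrite mulrC -normCK normcE' rmorphXn. Qed.

Lemma normc_real (x : R) : Normc.normc (x%:C%C) = `|x|.
Proof. by rewrite /Normc.normc /= expr0n /= addr0 sqrtr_sqr. Qed.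

Lemma nrm2_ge0 N (b : 'cV[C]_N) i : 0 <= nrm2 b i.
Proof. exact: sqr_ge0. Qed.

Lemma braket_diag n m (U : 'M[C]_(n * m)) g v :
  braket v (Sp U g) v = (\sum_i g i * nrm2 (coef U v) i)%:C%C.
Proof.
rewrite braket_spec rmorph_sum; apply: eq_bigr => i _.
by rewrite mulrAC conj_mul rmorphM /nrm2 -!rmorphM mulrC expr2.
Qed.

Lemma braket_cross n m (U : 'M[C]_(n * m)) g w v :
  Normc.normc (braket w (Sp U g) v) <=
  \sum_i `|g i| * (nrm2 (coef U w) i + nrm2 (coef U v) i) / 2.
Proof.
rewrite -lecR -normcE' /Sp braket_spec rmorph_sum.
apply: le_trans (ler_norm_sum _ _ _) _; apply: ler_sum => i _.
rewrite !normrM norm_conjC !normcE' normc_real -!rmorphM lecR /nrm2.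
set x := Normc.normc _; set y := Normc.normc _.
have := mulr_ge0 (normr_ge0 (g i)) (sqr_ge0 (x - y)).
have := normr_ge0 (g i).
nra.
Qed.

Lemma dot_form N (a b : 'cV[C]_N) :
  (a^t* *m b) 0 0 = \sum_i (a i 0)^* * b i 0.
Proof. rewrite !mxE; apply: eq_bigr => i _; by rewrite !mxE. Qed.

Lemma coef_tot n m (U : 'M[C]_(n * m)) v : U \is unitarymx ->
  \sum_i nrm2 (coef U v) i = tot v.
Proof.
move=> uU; apply: complexI; rewrite !rmorph_sum /=.
transitivity (((coef U v)^t* *m coef U v) 0 0).
  rewrite dot_form; apply: eq_bigr => i _; by rewrite conj_mul.
rewrite /coef ctr_mul trmxCK mulmxA -(mulmxA _ U) (unitarymxP uU) mulmx1 dot_form.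
rewrite (reindex _ (curry_mxvec_bij _ _)) /= /tot.
transitivity (\sum_i \sum_j (v i j)^* * v i j).
  rewrite pair_bigA; apply: eq_bigr => -[i j] _; by rewrite /vec !mxE mxvecE.
apply: eq_bigr => i _; rewrite rmorph_sum; apply: eq_bigr => j _; exact: conj_mul.
Qed.

Lemma unit_vecE n m (v : 'M[C]_(n, m)) : unit_vec v <-> tot v = 1.
Proof.
rewrite /unit_vec /tot.
have -> : \sum_i \sum_j `|v i j| ^+ 2 = (\sum_i \sum_j Normc.normc (v i j) ^+ 2)%:C%C.
  rewrite rmorph_sum; apply: eq_bigr => i _; rewrite rmorph_sum.
  by apply: eq_bigr => j _; rewrite normcE' rmorphXn.
split; first by rewrite -(rmorph1 (real_complex R)) => /complexI.
by move->; rewrite rmorph1.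
Qed.

Lemma tot_ge0 n m (v : 'M[C]_(n, m)) : 0 <= tot v.
Proof. by apply: sumr_ge0 => i _; apply: sumr_ge0 => j _; exact: sqr_ge0. Qed.

Lemma nrm2_le1 n m (U : 'M[C]_(n * m)) v i : U \is unitarymx -> tot v = 1 ->
  nrm2 (coef U v) i <= 1.
Proof.
move=> uU <-; rewrite -(coef_tot v uU) (bigD1 i) //= lerDl.
by apply: sumr_ge0 => j _; exact: nrm2_ge0.
Qed.

Lemma exists_unit n m k : (0 < n)%N -> (0 < m)%N -> (1 <= k)%N ->
  exists v : 'M[C]_(n, m), tot v = 1 /\ (SR v <= k)%N.
Proof.
move=> hn hm hk; pose i0 := Ordinal hn; pose j0 := Ordinal hm.
have nb i j : Normc.normc (delta_mx i0 j0 i j) ^+ 2 = ((i == i0) && (j == j0))%:R :> R.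
  rewrite mxE; case: (_ && _).
    by rewrite (_ : (true%:R : C) = 1) // Normc.normc1 expr1n.
  by rewrite (_ : (false%:R : C) = 0) // Normc.normc0 expr0n.
exists (delta_mx i0 j0); split; last by rewrite /SR mxrank_delta.
rewrite /tot (bigD1 i0) // (bigD1 j0) // nb !eqxx /=.
rewrite big1 ?addr0; last first.
  by move=> j /negbTE hj; rewrite nb eqxx hj.
rewrite big1 ?addr0 // => i /negbTE hi; apply: big1 => j _.
by rewrite nb hi.
Qed.


Definition bnd n m k (Y : 'M[C]_(n * m)) M := forall v w : 'M[C]_(n, m),
  tot v = 1 -> tot w = 1 -> (SR v <= k)%N -> (SR w <= k)%N ->
  Normc.normc (braket w Y v) <= M.

Section NormS.
Local Open Scope classical_set_scope.
Variables (n m k : nat) (hn : (0 < n)%N) (hm : (0 < m)%N) (hk : (1 <= k)%N).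

Let E (Y : 'M[C]_(n * m)) := [set r : R | exists v w : 'M[C]_(n, m),
        [/\ unit_vec v, unit_vec w, (SR v <= k)%N, (SR w <= k)%N &
            r = Normc.normc (braket w Y v)]]%classic.

Lemma E_neq0 Y : E Y !=set0.
Proof.
have [v [tv sv]] := exists_unit hn hm hk.
exists (Normc.normc (braket v Y v)); exists v, v; split => //; exact/unit_vecE.
Qed.

Lemma E_ub Y M : bnd k Y M -> ubound (E Y) M.
Proof.
move=> hb r [v [w [uv uw sv sw ->]]]; apply: hb => //; exact/unit_vecE.
Qed.

Lemma normS_le Y M : bnd k Y M -> normS n m k Y <= M.
Proof. move=> hb; apply: ge_sup; [exact: E_neq0 | exact: E_ub]. Qed.

Lemma normS_ge Y M : bnd k Y M -> bnd k Y (normS n m k Y).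
Proof.
move=> hb v w tv tw sv sw; apply: (ub_le_sup (E := E Y)).
  by exists M; exact: E_ub.
exists v, w; split => //; exact/unit_vecE.
Qed.

Lemma normS_adh Y M eps : bnd k Y M -> 0 < eps ->
  exists v w : 'M[C]_(n, m), [/\ tot v = 1, tot w = 1, (SR v <= k)%N, (SR w <= k)%N &
    normS n m k Y - eps < Normc.normc (braket w Y v)].
Proof.
move=> hb he; have [r [v [w [uv uw sv sw ->]]] hr] := sup_adherent he (conj (E_neq0 Y) (ex_intro _ M (E_ub hb))).
by exists v, w; split => //; exact/unit_vecE.
Qed.
End NormS.


Lemma bnd_Sp n m k (U : 'M[C]_(n * m)) g : U \is unitarymx ->
  bnd k (Sp U g) (\sum_i `|g i|).
Proof.
move=> uU v w tv tw _ _; apply: le_trans (braket_cross _ _ _ _) _.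
apply: ler_sum => i _.
have h1 := nrm2_le1 i uU tv; have h2 := nrm2_le1 i uU tw.
have h3 := normr_ge0 (g i).
nra.
Qed.

Lemma specmx_ext N (U : 'M[C]_N) f g : (forall i, f i = g i) -> specmx U f = specmx U g.
Proof. by move=> h; congr specmx; apply/funext. Qed.

Lemma specmxD N (U : 'M[C]_N) f g : specmx U f + specmx U g = specmx U (fun i => f i + g i).
Proof.
rewrite /specmx -mulmxDl -mulmxDr; congr (_ *m _ *m _).
by apply/matrixP => i j; rewrite !mxE -mulrnDl.
Qed.

Lemma braketZ n m (U : 'M[C]_(n * m)) c g w v :
  braket w (Sp U (fun i => c * g i)) v = c%:C%C * braket w (Sp U g) v.
Proof.
rewrite /Sp !braket_spec mulr_sumr; apply: eq_bigr => i _.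
by rewrite rmorphM; ring.
Qed.

Lemma Pneg_Sp n m (U : 'M[C]_(n * m)) d :
  Pneg U d = Sp U (fun i => if d i < 0 then 1 else 0).
Proof. by apply: specmx_ext => i; case: ifP; rewrite ?rmorph1 ?rmorph0. Qed.

Lemma Xneg_Sp n m (U : 'M[C]_(n * m)) d :
  Xneg U d = Sp U (fun i => if d i < 0 then d i else 0).
Proof. by apply: specmx_ext => i; case: ifP; rewrite ?rmorph0. Qed.

Lemma PzPn_Sp n m (U : 'M[C]_(n * m)) d :
  Pzero U d + Pneg U d = Sp U (fun i => if d i <= 0 then 1 else 0).
Proof.
rewrite specmxD; apply: specmx_ext => i.
have [h|h|h] := ltrgtP (d i) 0; rewrite /= ?rmorph1 ?rmorph0 ?addr0 ?add0r //.
Qed.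

Lemma d_neq0 n m (U : 'M[C]_(n * m)) (d : 'I_(n * m) -> R) :
  specmx U (fun i => (d i)%:C%C) \in unitmx -> forall i, d i != 0.
Proof.
move=> hX i; apply/negP => /eqP hi; move: hX.
rewrite /specmx unitmxE !det_mulmx det_diag (bigD1 i) //= mxE hi rmorph0 mul0r.
by rewrite mulr0 mul0r unitr0.
Qed.

Lemma sum2 N (t e : 'I_N -> R) a b :
  \sum_i (a * t i - b * (e i * t i)) = a * \sum_i t i - b * \sum_i e i * t i.
Proof. by rewrite sumrB !mulr_sumr. Qed.

Lemma sum3 N (t e f : 'I_N -> R) a b :
  \sum_i (a * t i - b * (e i * t i) + f i * t i) =
  a * \sum_i t i - b * \sum_i e i * t i + \sum_i f i * t i.
Proof. by rewrite big_split sumrB !mulr_sumr. Qed.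

Lemma cross_e N (e ta tb : 'I_N -> R) : (forall i, 0 <= e i) ->
  \sum_i `|e i| * (ta i + tb i) / 2 = (\sum_i e i * ta i + \sum_i e i * tb i) / 2.
Proof.
move=> he; rewrite -big_split mulr_suml; apply: eq_bigr => i _.
by rewrite ger0_norm // /= mulrDr.
Qed.

Lemma coefZ n m (U : 'M[C]_(n * m)) (a : R) v i :
  nrm2 (coef U ((a%:C)%C *: v)) i = a ^+ 2 * nrm2 (coef U v) i.
Proof.
rewrite /nrm2 /coef /vec !linearZ /= mxE Normc.normcM normc_real.
by rewrite exprMn real_normK ?num_real.
Qed.

End Aux.



Theorem theorem5p1 (R : realType) (n m k : nat)
  (X : 'M[R[i]]_(n * m)) (U : 'M[R[i]]_(n * m)) (d : 'I_(n * m) -> R) :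
  (m <= n)%N -> (1 <= k)%N -> (k <= m)%N ->
  hermmx X ->
  U \is unitarymx ->
  X = specmx U (fun i => (d i)%:C%C) ->
  (* 1. *)
  (normS n m k (Pneg U d) = 1 -> ~ kblockpos n m k X) /\
  (* 2. *)
  (normS n m k (Pzero U d + Pneg U d) < 1 ->
   (forall i, 0 < d i ->
      d i >= normS n m k (Xneg U d) / (1 - normS n m k (Pzero U d + Pneg U d))) ->
   kblockpos n m k X) /\
  (* 3. *)
  (normS n m k (Pneg U d) < 1 ->
   (forall i j, d i < 0 -> d j < 0 -> d i = d j) ->
   X \in unitmx ->
   (forall i, 0 < d i ->
      d i < normS n m k (Xneg U d) / (1 - normS n m k (Pneg U d))) ->
   ~ kblockpos n m k X).
Proof.
move=> hmn hk hkm hX uU eX.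
have hm : (0 < m)%N by apply: leq_trans hk hkm.
have hn : (0 < n)%N by apply: leq_trans hm hmn.
have hN : (0 < n * m)%N by rewrite muln_gt0 hn hm.
pose i0 : 'I_(n * m) := Ordinal hN.
have eXS : X = Sp U d by [].
have bX v : braket v X v = (\sum_i d i * nrm2 (coef U v) i)%:C%C.
  by rewrite eXS braket_diag.
have tsum v : tot v = 1 -> \sum_i nrm2 (coef U v) i = 1.
  by move=> tv; rewrite coef_tot.
have kbR : kblockpos n m k X -> forall v, (SR v <= k)%N ->
    0 <= \sum_i d i * nrm2 (coef U v) i.
  by move=> [_ kb] v sv; rewrite -ler0c -bX; apply: kb.
have bPn : bnd k (Pneg U d) (\sum_i `|(if d i < 0 then 1 else 0 : R)|).
  by rewrite Pneg_Sp; exact: bnd_Sp.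
have crossP v w : Normc.normc (braket w (Pneg U d) v) <=
    (\sum_i (if d i < 0 then 1 else 0) * nrm2 (coef U w) i +
     \sum_i (if d i < 0 then 1 else 0) * nrm2 (coef U v) i) / 2.
  rewrite Pneg_Sp; apply: le_trans (braket_cross _ _ _ _) _.
  by rewrite cross_e // => i; case: ifP.
split; [|split].
- move=> h1 kb.
  have [[i1 hi1]|noneg] := pselect (exists i, d i < 0); last first.
    have : normS n m k (Pneg U d) <= 0.
      apply: normS_le => // v w tv tw sv sw.
      apply: le_trans (crossP v w) _.
      rewrite !big1 ?addr0 ?mul0r // => i _; case: ifP => h; rewrite ?mul0r //;
        by exfalso; apply: noneg; exists i.
    by rewrite h1 ler10.
  case: (arg_maxP (i0 := i1) (P := fun i => d i < 0) d hi1) => im his hmax.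
  set mu := - d im.
  have hmu : 0 < mu by rewrite /mu oppr_gt0.
  set L := \sum_i `|d i|.
  have hL : 0 <= L by apply: sumr_ge0 => i _; exact: normr_ge0.
  have dL i : d i <= L.
    rewrite /L (bigD1 i) //=; apply: le_trans (ler_norm _) _; rewrite lerDl.
    by apply: sumr_ge0 => j _; exact: normr_ge0.
  have pb v : tot v = 1 -> (SR v <= k)%N ->
      (L + mu) * (\sum_i (if d i < 0 then 1 else 0) * nrm2 (coef U v) i) <= L.
    move=> tv sv; have h0 := kbR kb v sv.
    have : \sum_i d i * nrm2 (coef U v) i <= \sum_i (L * nrm2 (coef U v) i -
        (L + mu) * ((if d i < 0 then 1 else 0) * nrm2 (coef U v) i)).
      apply: ler_sum => i _; have ht := nrm2_ge0 (coef U v) i; have := dL i.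
      case: ifP => hneg.
        move=> _; have hle : d i <= d im := hmax i hneg.
        by apply: ar1 => //; rewrite /mu opprK.
      by move=> hl; apply: ar2.
    rewrite sum2 tsum //; exact: ar3.
  have : normS n m k (Pneg U d) <= L / (L + mu).
    apply: normS_le => // v w tv tw sv sw.
    apply: le_trans (crossP v w) _.
    rewrite ler_pdivlMr; last by rewrite ltr_wpDl.
    exact: ar4 (pb w tw sw) (pb v tv sv).
  rewrite h1 ler_pdivlMr; last by rewrite ltr_wpDl.
  by move/ar5; apply.
- move=> hQ hpos; split => // v sv.
  rewrite bX ler0c.
  set Q := normS n m k (Pzero U d + Pneg U d) in hQ hpos *.
  set s := normS n m k (Xneg U d) in hpos *.
  have bQ : bnd k (Pzero U d + Pneg U d) (\sum_i `|(if d i <= 0 then 1 else 0 : R)|).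
    by rewrite PzPn_Sp; exact: bnd_Sp.
  have bS : bnd k (Xneg U d) (\sum_i `|(if d i < 0 then d i else 0 : R)|).
    by rewrite Xneg_Sp; exact: bnd_Sp.
  have key u : tot u = 1 -> (SR u <= k)%N -> 0 <= \sum_i d i * nrm2 (coef U u) i.
    move=> tu su.
    have hq : \sum_i (if d i <= 0 then 1 else 0) * nrm2 (coef U u) i <= Q.
      have H : Normc.normc (braket u (Pzero U d + Pneg U d) u) <= Q := normS_ge bQ tu tu su su.
      rewrite PzPn_Sp braket_diag normc_real in H; apply: le_trans H; exact: ler_norm.
    have hs' : Normc.normc (braket u (Xneg U d) u) <= s := normS_ge bS tu tu su su.
    rewrite Xneg_Sp braket_diag normc_real in hs'.
    have hs : - \sum_i (if d i < 0 then d i else 0) * nrm2 (coef U u) i <= s.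
      by apply: le_trans hs'; rewrite -normrN; exact: ler_norm.
    have s0 : 0 <= s by apply: le_trans hs'; exact: normr_ge0.
    have hQ1 : 0 < 1 - Q by rewrite subr_gt0.
    set Lb := s / (1 - Q).
    have hLb : Lb * (1 - Q) = s by rewrite /Lb divfK // gt_eqF.
    have hLb0 : 0 <= Lb by rewrite /Lb divr_ge0 // ltW.
    have : \sum_i (Lb * nrm2 (coef U u) i -
        Lb * ((if d i <= 0 then 1 else 0) * nrm2 (coef U u) i) +
        (if d i < 0 then d i else 0) * nrm2 (coef U u) i)
        <= \sum_i d i * nrm2 (coef U u) i.
      apply: ler_sum => i _; have ht := nrm2_ge0 (coef U u) i.
      have [h|h|h] := ltrgtP (d i) 0.
      + exact: ar6.
      + by apply: ar7 => //; exact: hpos.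
      + rewrite h; exact: ar8.
    rewrite sum3 tsum // => H; exact: ar9 H hq hs hLb hLb0.
  have [T0|Tp] := eqVneq (tot v) 0.
    have : \sum_i nrm2 (coef U v) i = 0 by rewrite coef_tot.
    move=> H; have ht := psumr_eq0P (fun i _ => nrm2_ge0 (coef U v) i) H.
    by rewrite big1 // => i _; rewrite ht ?mulr0.
  have T0 : 0 < tot v by rewrite lt_def Tp tot_ge0.
  pose a := (Num.sqrt (tot v))^-1.
  have ha : a ^+ 2 = (tot v)^-1 by rewrite /a exprVn sqr_sqrtr // ltW.
  have an0 : a%:C%C != 0 :> R[i].
    rewrite -(rmorph0 (real_complex R)) (inj_eq (@complexI R)) /a invr_eq0 sqrtr_eq0.
    by rewrite -ltNge.
  have := key (a%:C%C *: v).
  have -> : \sum_i d i * nrm2 (coef U (a%:C%C *: v)) i =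
      a ^+ 2 * \sum_i d i * nrm2 (coef U v) i.
    by rewrite mulr_sumr; apply: eq_bigr => i _; rewrite coefZ; ring.
  move=> h; have {h} := h _ _.
  rewrite ?pmulr_rge0 ?ha ?invr_gt0 //.
  + move=> h; apply: h.
    * rewrite -(coef_tot _ uU).
      rewrite (eq_bigr (fun i => a ^+ 2 * nrm2 (coef U v) i)); last by move=> i _; rewrite coefZ.
      by rewrite -mulr_sumr coef_tot // ha mulVf.
    * by rewrite /SR (eqmx_scale _ an0).
- move=> hPm heq hXu hlt kb.
  have kbr := kbR kb.
  have dnz := d_neq0 (eq_ind _ (fun Y => Y \in unitmx) hXu _ eX).
  set Pm := normS n m k (Pneg U d) in hPm hlt *.
  set s := normS n m k (Xneg U d) in hlt *.
  have [v0 [tv0 sv0]] := exists_unit R hn hm hk.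
  have hPm1 : 0 < 1 - Pm by rewrite subr_gt0.
  have [[i1 hi1]|noneg] := pselect (exists i, d i < 0); last first.
    have s0 : s <= 0.
      apply: normS_le => // v w tv tw sv sw; rewrite Xneg_Sp.
      apply: le_trans (braket_cross _ _ _ _) _.
      rewrite big1 // => i _; case: ifP => h; last by rewrite normr0 !mul0r.
      by exfalso; apply: noneg; exists i.
    have hi0 : 0 < d i0.
      rewrite lt_def dnz /= leNgt; apply/negP => h; apply: noneg; exists i0.
      by [].
    have := hlt i0 hi0; rewrite ltr_pdivlMr // => H; exact: ar10 H s0 hi0 hPm1.
  set mu := - d i1.
  have hmu : 0 < mu by rewrite /mu oppr_gt0.
  have hneg i : d i < 0 -> d i = - mu by move=> h; rewrite /mu opprK; apply: heq.
  have sle : s <= mu * Pm.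
    apply: normS_le => // v w tv tw sv sw.
    rewrite Xneg_Sp (_ : Sp U _ = Sp U (fun i => (- mu) * (if d i < 0 then 1 else 0))); last first.
      apply: specmx_ext => i; congr (_%:C%C).
      by case: ifP => h; rewrite ?(hneg i h) ?mulr1 ?mulr0.
    rewrite braketZ Normc.normcM normc_real normrN (ger0_norm (ltW hmu)) -Pneg_Sp.
    apply: ler_wpM2l; first exact: ltW.
    exact: (normS_ge bPn).
  have [[i2 hi2]|nopos] := pselect (exists i, 0 < d i); last first.
    have := kbr v0 sv0.
    have e i : d i = - mu.
      apply: hneg; rewrite ltNge le_eqVlt negb_or eq_sym dnz /=.
      by apply/negP => h; apply: nopos; exists i.
    rewrite (eq_bigr (fun i => - mu * nrm2 (coef U v0) i)); last by move=> i _; rewrite e.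
    rewrite -mulr_sumr tsum // mulr1 => H.
    by move: H; rewrite oppr_ge0 leNgt hmu.
  case: (arg_maxP (i0 := i2) (P := fun i => 0 < d i) d hi2) => im his hmax.
  set B := d im.
  have hB := hlt im his; rewrite -/B ltr_pdivlMr // in hB.
  have hB2 : B * (1 - Pm) < mu * Pm by apply: lt_le_trans hB sle.
  have hBm : 0 < B + mu by rewrite addr_gt0.
  set dl := mu * Pm - B * (1 - Pm).
  set eps := dl / (B + mu).
  have heps : eps * (B + mu) = dl by rewrite /eps divfK // gt_eqF.
  have eps0 : 0 < eps by rewrite /eps divr_gt0 // subr_gt0.
  have [v [w [tv tw sv sw hvw]]] := normS_adh hn hm hk bPn eps0.
  have hc : Pm - eps < (\sum_i (if d i < 0 then 1 else 0) * nrm2 (coef U w) i +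
      \sum_i (if d i < 0 then 1 else 0) * nrm2 (coef U v) i) / 2 :=
    lt_le_trans hvw (crossP v w).
  have [u [tu su hu]] : exists u, [/\ tot u = 1, (SR u <= k)%N &
      Pm - eps < \sum_i (if d i < 0 then 1 else 0) * nrm2 (coef U u) i].
    case: (lerP (\sum_i (if d i < 0 then 1 else 0) * nrm2 (coef U w) i)
                (\sum_i (if d i < 0 then 1 else 0) * nrm2 (coef U v) i)) => h.
      by exists v; split => //; exact: ar12 hc h.
    by exists w; split => //; exact: ar12' hc h.
  have h0 := kbr u su.
  have : \sum_i d i * nrm2 (coef U u) i <= \sum_i (B * nrm2 (coef U u) i -
      (B + mu) * ((if d i < 0 then 1 else 0) * nrm2 (coef U u) i)).
    apply: ler_sum => i _; have ht := nrm2_ge0 (coef U u) i.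
    case: ifP => hneg'.
      rewrite (hneg i hneg'); exact: ar13.
    have : d i <= B.
      case: (ltrP 0 (d i)) => hp; first exact: hmax.
      by apply: le_trans hp _; exact: ltW.
    by move=> hl; apply: ar2.
  move=> H; rewrite sum2 tsum // in H.
  have hp := hu; rewrite -subr_gt0 in hp.
  exact: ar14 h0 H heps (mulr_gt0 hBm hp).
Qed.
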